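(* For all $p\in(0,1)$ and $n\ge0$, $\mathbb P_p[o\rightsquigarrow\partial B_n]=\mathbb P'_p[o\leftrightsquigarrow\partial B_n]$.
   Context: $\mathbb P_p$ is directed Bernoulli bond percolation on $\mathbb Z^d$: each directed nearest-neighbor edge $(u,v)$ ($\|u-v\|_1=1$) is open independently with probability $p$; $\{o\rightsquigarrow\partial B_n\}$ is the event that there is a path of open directed edges from the origin $o$ to a vertex of $\partial B_n$. $\mathbb P'_p$ is ordinary (undirected) Bernoulli bond percolation on the nearest-neighbor edges of $\mathbb Z^d$ with parameter $p$, and $\{o\leftrightsquigarrow\partial B_n\}$ is the event that some vertex of $\partial B_n$ is joined to $o$ by a path of open edges. Here $B_n=\{x:\|x\|_1\le n\}$, $\partial B_n=B_{n+1}\setminus B_n$. *)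

(* Defs.v *)
From HB Require Import structures.
From mathcomp Require Import all_boot all_order all_algebra.
From mathcomp Require Import reals.
Set Implicit Arguments. Unset Strict Implicit. Unset Printing Implicit Defensive.
Import Order.TTheory GRing.Theory Num.Theory.

(* The vertices of the cube [-N,N]^d of Z^d are encoded as finite functions
   'I_d -> 'I_(2N+1) (= 'I_(2N).+1), coordinate k standing for the integer k - N. *)

Definition cube (d N : nat) := {ffun 'I_d -> 'I_(2 * N).+1}.

Definition coord d N (x : cube d N) (i : 'I_d) : int :=
  ((x i : nat)%:Z - N%:Z)%R.

Definition norm1 d N (x : cube d N) : nat := \sum_(i < d) absz (coord x i).

Definition dist1 d N (x y : cube d N) : nat :=
  \sum_(i < d) absz (coord x i - coord y i)%R.

Definition adj d N (x y : cube d N) : bool := dist1 x y == 1%N.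

Definition origin d N : cube d N := [ffun => inord N : 'I_(2 * N).+1].

(* x \in \partial B_n = B_{n+1} \ B_n, i.e. ||x||_1 = n+1 *)
Definition in_bdry d N (n : nat) (x : cube d N) : bool := norm1 x == n.+1.

Definition bern_weight (R : realType) (I : finType) (p : R) (om : {ffun I -> bool}) : R :=
  (\prod_(i : I) (if om i then p else 1 - p))%R.

Definition Prob (R : realType) (I : finType) (p : R) (E : pred {ffun I -> bool}) : R :=
  (\sum_(om | E om) bern_weight p om)%R.

(* Directed percolation: each ordered pair (u,v) carries an independent
   Bernoulli(p) variable; the directed edge (u,v) (u,v neighbours) is open iff
   om (u,v).  (Coordinates of non-adjacent pairs are irrelevant dummies.) *)
Definition dir_open d N (om : {ffun cube d N * cube d N -> bool}) : rel (cube d N) :=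
  fun u v => adj u v && om (u, v).

(* Undirected percolation: each unordered pair {u,v} (encoded as the set
   [set u; v]) carries an independent Bernoulli(p) variable. *)
Definition undir_open d N (om : {ffun {set cube d N} -> bool}) : rel (cube d N) :=
  fun u v => adj u v && om [set u; v].

Definition dir_reach d N (n : nat) (om : {ffun cube d N * cube d N -> bool}) : bool :=
  [exists w, in_bdry n w && connect (dir_open om) (origin d N) w].

Definition undir_reach d N (n : nat) (om : {ffun {set cube d N} -> bool}) : bool :=
  [exists w, in_bdry n w && connect (undir_open om) (origin d N) w].

(* Main.v *)
Require Import Defs.
From HB Require Import structures.
From mathcomp Require Import all_boot all_order all_algebra.
From mathcomp Require Import reals ring.
Set Implicit Arguments. Unset Strict Implicit. Unset Printing Implicit Defensive.
Import Order.TTheory GRing.Theory Num.Theory.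
Local Open Scope ring_scope.

Section Prob.
Variable R : realType.
Variable p : R.
Variable I : finType.
Implicit Types (om : {ffun I -> bool}) (i : I) (b c : bool).

Definition Ex (f : {ffun I -> bool} -> R) : R := \sum_om bern_weight p om * f om.

Lemma Ex_ext f g : f =1 g -> Ex f = Ex g.
Proof. by move=> h; apply: eq_bigr => om _; rewrite h. Qed.

Lemma Ex_const (c : R) : Ex (fun _ => c) = c.
Proof.
rewrite /Ex -mulr_suml /bern_weight.
rewrite -(bigA_distr_bigA (fun (i : I) (b : bool) => if b then p else 1 - p)).
rewrite big1 ?mul1r // => i _; rewrite big_bool /=; ring.
Qed.

Definition upd (om : {ffun I -> bool}) i b : {ffun I -> bool} :=
  [ffun x => if x == i then b else om x].
Definition wo i (om : {ffun I -> bool}) : R :=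
  \prod_(x | x != i) (if om x then p else 1 - p).

Lemma updE om i b : upd om i b i = b.
Proof. by rewrite ffunE eqxx. Qed.

Lemma bw_split i om : bern_weight p om = (if om i then p else 1 - p) * wo i om.
Proof. by rewrite /bern_weight (bigD1 i). Qed.

Lemma wo_upd i om b : wo i (upd om i b) = wo i om.
Proof. by apply: eq_bigr => x /negbTE xi; rewrite ffunE xi. Qed.

Lemma upd_id om i : om i -> upd om i true = om.
Proof. by move=> h; apply/ffunP => x; rewrite ffunE; case: eqP => // ->; rewrite h. Qed.

Lemma upd_upd om i b c : upd (upd om i b) i c = upd om i c.
Proof. by apply/ffunP => x; rewrite !ffunE; case: eqP. Qed.

Lemma flip_inj i : injective (fun om => upd om i (~~ om i)).
Proof.
move=> om1 om2 /= h.
have h1 : om1 i = om2 i by have := congr1 (fun f : {ffun I -> bool} => f i) h; rewrite !updE => /negb_inj.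
apply/ffunP => x; have := congr1 (fun f : {ffun I -> bool} => f x) h.
by rewrite !ffunE; case: eqP => [->|].
Qed.

Lemma sum_split i (F : {ffun I -> bool} -> R) :
  \sum_(om : {ffun I -> bool}) F om = \sum_(om : {ffun I -> bool} | om i) (F om + F (upd om i false)).
Proof.
rewrite (bigID (fun om : {ffun I -> bool} => om i)) /= big_split /=; congr (_ + _).
rewrite (reindex_inj (@flip_inj i)) /=.
apply: eq_big => om; first by rewrite updE negbK.
by move=> h; rewrite updE negbK in h; rewrite h.
Qed.

Lemma Ex_split i f :
  Ex f = p * Ex (fun om => f (upd om i true)) + (1 - p) * Ex (fun om => f (upd om i false)).
Proof.
rewrite /Ex !(sum_split i) !mulr_sumr -big_split /=.
apply: eq_bigr => om h.
rewrite !(bw_split i) !wo_upd !updE !upd_upd h !upd_id //.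
ring.
Qed.
End Prob.
Section Graph.
Variable V : finType.
Variable T : pred V.
Implicit Types (W K : {set V}) (r : rel V).

Definition rW W r : rel V := fun u v => [&& u \in W, v \in W & r u v].
Definition reachR W K r : bool :=
  [exists s, exists t, [&& s \in K, s \in W, t \in W, T t & connect (rW W r) s t]].

Lemma reachR_ext W K r r' : rW W r =2 rW W r' -> reachR W K r = reachR W K r'.
Proof.
move=> h; apply: eq_existsb => s; apply: eq_existsb => t.
by rewrite (eq_connect h).
Qed.

Lemma path_lem W r k (nTk : ~~ T k) (q : seq V) : forall x, x \in W ->
  path (rW W r) x q -> T (last x q) ->
  (x != k /\ connect (rW (W :\ k) r) x (last x q)) \/
  (exists j, [/\ j \in W :\ k, r k j & connect (rW (W :\ k) r) j (last x q)]).
Proof.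
elim: q => [|y q IH] x xW /=.
  move=> _ Tx; left; split; last exact: connect0.
  by apply: contraNneq nTk => <-.
case/andP=> /and3P [_ yW rxy] pth Tl.
case: (IH y yW pth Tl) => [[yk cy]|]; last by right.
case: (eqVneq x k) => [xk|xk].
  by right; exists y; split => //; [rewrite !inE yk | rewrite -xk].
left; split => //; apply: connect_trans cy; apply: connect1.
by rewrite /rW !inE xk yk xW yW.
Qed.

Lemma S1 W K r k : k \in K -> k \in W -> ~~ T k ->
  reachR W K r = reachR (W :\ k) ((K :\ k) :|: [set j in W | r k j]) r.
Proof.
move=> kK kW nTk; apply/idP/idP.
  case/existsP=> s /existsP [t /and5P [sK sW tW Tt /connectP [q pth tq]]]; subst t.
  have tk : last s q != k by apply: contraNneq nTk => <-.
  case: (path_lem nTk sW pth Tt) => [[sk c]|[j [jW rkj c]]].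
    apply/existsP; exists s; apply/existsP; exists (last s q).
    by rewrite !inE sk sK sW tk tW Tt c.
  apply/existsP; exists j; apply/existsP; exists (last s q).
  move: jW; rewrite !inE => /andP [jk jW].
  by rewrite jk jW rkj tk tW Tt c orbT.
case/existsP=> s /existsP [t /and5P [sK sW tW Tt c]].
have sub : subrel (rW (W :\ k) r) (connect (rW W r)).
  by move=> u v; rewrite /rW !inE => /and3P [/andP [_ uW] /andP [_ vW] ruv]; apply: connect1; rewrite /rW uW vW.
move: sK sW tW; rewrite !inE => /orP [/andP [sk sK]|/andP[sW' rks]] /andP [_ sW] /andP [_ tW].
- apply/existsP; exists s; apply/existsP; exists t.
  by rewrite sK sW tW Tt (connect_sub sub c).
- apply/existsP; exists k; apply/existsP; exists t.
  rewrite kK kW tW Tt /=; apply: connect_trans (connect_sub sub c).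
  by apply: connect1; rewrite /rW kW sW rks.
Qed.
End Graph.


Section Model.
Variable R : realType.
Variable p : R.
Variable V : finType.
Variable a : rel V.
Variable T : pred V.

Definition ropen (I : finType) (e : V -> V -> I) (om : {ffun I -> bool}) : rel V :=
  fun u v => a u v && om (e u v).
Definition Nb (I : finType) (e : V -> V -> I) (D : {set V}) k om : {set V} :=
  [set j in D | ropen e om k j].
Definition ev (I : finType) (e : V -> V -> I) W K (om : {ffun I -> bool}) : R :=
  (reachR T W K (ropen e om))%:R.

Lemma upd_reach (I : finType) (e : V -> V -> I)
  (inj : forall k, injective (e k))
  (sep : forall k u v j, u != k -> v != k -> e u v != e k j)
  W k D X j0 b om :
  reachR T (W :\ k) (X :|: Nb e D k (upd om (e k j0) b)) (ropen e (upd om (e k j0) b))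
  = reachR T (W :\ k) ((X :|: [set j | (j == j0) && (j0 \in D) && a k j0 && b]) :|: Nb e (D :\ j0) k om) (ropen e om).
Proof.
rewrite (@reachR_ext _ _ _ _ _ (ropen e om)); last first.
  move=> u v; rewrite /rW /ropen !inE ffunE.
  case: (eqVneq u k) => //= uk; case: (eqVneq v k) => //= vk.
  by rewrite (negbTE (sep _ _ _ j0 uk vk)).
congr reachR; apply/setP => j; rewrite !inE /ropen ffunE (inj_eq (inj k)).
case: (eqVneq j j0) => [->|ne] /=.
  by case: (j0 \in X); case: (j0 \in D); case: (a k j0); case: b.
by rewrite orbF.
Qed.

Variables (I1 I2 : finType) (e1 : V -> V -> I1) (e2 : V -> V -> I2).
Hypothesis inj1 : forall k, injective (e1 k).
Hypothesis inj2 : forall k, injective (e2 k).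
Hypothesis sep1 : forall k u v j, u != k -> v != k -> e1 u v != e1 k j.
Hypothesis sep2 : forall k u v j, u != k -> v != k -> e2 u v != e2 k j.

Lemma inner W k (IH : forall K, Ex p (ev e1 (W :\ k) K) = Ex p (ev e2 (W :\ k) K)) :
  forall D X,
  Ex p (fun om => (reachR T (W :\ k) (X :|: Nb e1 D k om) (ropen e1 om))%:R) =
  Ex p (fun om => (reachR T (W :\ k) (X :|: Nb e2 D k om) (ropen e2 om))%:R).
Proof.
move=> D; have [n ltD] := ubnP #|D|; elim: n D ltD => // n IHn D ltD X.
have [D0|[j0 j0D]] := set_0Vmem D.
  have E (I : finType) (e : V -> V -> I) om : X :|: Nb e D k om = X.
    by apply/setP => j; rewrite !inE D0 inE orbF.
  rewrite (Ex_ext p (g := ev e1 (W :\ k) X)); last by move=> om; rewrite E.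
  by rewrite (Ex_ext p (f := fun om => _) (g := ev e2 (W :\ k) X)) //; move=> om; rewrite E.
rewrite (Ex_split _ (e1 k j0)) (Ex_split _ (e2 k j0)).
have lt : (#|D :\ j0| < n)%N.
  by move: ltD; rewrite (cardsD1 j0 D) j0D add1n ltnS.
congr (_ * _ + _ * _).
  rewrite (Ex_ext p (g := fun om => (reachR T (W :\ k) ((X :|: [set j | (j == j0) && (j0 \in D) && a k j0 && true]) :|: Nb e1 (D :\ j0) k om) (ropen e1 om))%:R)); last by move=> om /=; rewrite upd_reach.
  rewrite [RHS](Ex_ext p (g := fun om => (reachR T (W :\ k) ((X :|: [set j | (j == j0) && (j0 \in D) && a k j0 && true]) :|: Nb e2 (D :\ j0) k om) (ropen e2 om))%:R)); last by move=> om /=; rewrite upd_reach.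
  exact: IHn.
rewrite (Ex_ext p (g := fun om => (reachR T (W :\ k) ((X :|: [set j | (j == j0) && (j0 \in D) && a k j0 && false]) :|: Nb e1 (D :\ j0) k om) (ropen e1 om))%:R)); last by move=> om /=; rewrite upd_reach.
rewrite [RHS](Ex_ext p (g := fun om => (reachR T (W :\ k) ((X :|: [set j | (j == j0) && (j0 \in D) && a k j0 && false]) :|: Nb e2 (D :\ j0) k om) (ropen e2 om))%:R)); last by move=> om /=; rewrite upd_reach.
exact: IHn.
Qed.

Lemma main W K : Ex p (ev e1 W K) = Ex p (ev e2 W K).
Proof.
have [n ltW] := ubnP #|W|; elim: n W ltW K => // n IHn W ltW K.
have [KW0|[k]] := set_0Vmem (K :&: W).
  have E (I : finType) (e : V -> V -> I) om : ev e W K om = 0.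
    rewrite /ev; suff -> : reachR T W K (ropen e om) = false by [].
    apply/negbTE/existsP => -[s /existsP [t /and5P [sK sW _ _ _]]].
    have : s \in K :&: W by rewrite inE sK sW.
    by rewrite KW0 inE.
  by rewrite (Ex_ext p (E _ e1)) (Ex_ext p (E _ e2)) !Ex_const.
rewrite inE => /andP [kK kW].
case Tk: (T k).
  have E (I : finType) (e : V -> V -> I) om : ev e W K om = 1.
    rewrite /ev; suff -> : reachR T W K (ropen e om) by [].
    by apply/existsP; exists k; apply/existsP; exists k; rewrite kK kW Tk connect0.
  by rewrite (Ex_ext p (E _ e1)) (Ex_ext p (E _ e2)) !Ex_const.
have E (I : finType) (e : V -> V -> I) om : ev e W K om =
   (reachR T (W :\ k) ((K :\ k) :|: Nb e W k om) (ropen e om))%:R.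
  by rewrite /ev (@S1 _ T W K (ropen e om) k kK kW) ?Tk.
rewrite (Ex_ext p (E _ e1)) (Ex_ext p (E _ e2)).
apply: inner => K'; apply: IHn.
by move: ltW; rewrite (cardsD1 k W) kW add1n ltnS.
Qed.
End Model.

Lemma Prob_Ex (R : realType) (p : R) (I : finType) (E : pred {ffun I -> bool}) :
  Prob p E = Ex p (fun om => (E om)%:R).
Proof.
rewrite /Prob /Ex big_mkcond /=; apply: eq_bigr => om _.
by case: (E om); rewrite ?mulr1 ?mulr0.
Qed.

Theorem lemma3p4 (R : realType) (d n N : nat) (p : R) :
  (0 < p < 1)%R -> (n < N)%N ->
  Prob p (dir_reach (d:=d) (N:=N) n) = Prob p (undir_reach (d:=d) (N:=N) n).
Proof.
move=> _ _.
set V := cube d N.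
pose e1 := fun u v : V => (u, v).
pose e2 := fun u v : V => [set u; v].
have inj1 : forall k, injective (e1 k) by move=> k x y [].
have sep1 : forall k u v j, u != k -> v != k -> e1 u v != e1 k j.
  by move=> k u v j uk _; rewrite /e1 xpair_eqE (negbTE uk).
have inj2 : forall k, injective (e2 k).
  move=> k x y E.
  have : x \in e2 k y by rewrite -E /e2 set22.
  rewrite /e2 in_set2 => /orP [/eqP xk|/eqP //].
  have : y \in e2 k x by rewrite E /e2 set22.
  by rewrite /e2 in_set2 xk orbb => /eqP.
have sep2 : forall k u v j, u != k -> v != k -> e2 u v != e2 k j.
  move=> k u v j uk vk; apply/eqP => E.
  have : k \in e2 u v by rewrite E /e2 set21.
  by rewrite /e2 in_set2 => /orP [] /eqP ek; [move: uk | move: vk]; rewrite ek eqxx.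
have M := main p (@adj d N) (in_bdry n) inj1 inj2 sep1 sep2 setT [set origin d N].
have rW_T (r : rel V) : rW setT r =2 r by move=> u v; rewrite /rW !inE.
have R1 (I : finType) (e : V -> V -> I) (om : {ffun I -> bool}) (r : rel V) :
    r =2 ropen (@adj d N) e om ->
    [exists w, in_bdry n w && connect r (origin d N) w] =
    reachR (in_bdry n) setT [set origin d N] (ropen (@adj d N) e om).
  move=> hr; apply/existsP/existsP.
    case=> w /andP [Tw c]; exists (origin d N); apply/existsP; exists w.
    by rewrite !inE eqxx Tw (eq_connect (rW_T _)) -(eq_connect hr) c.
  case=> s /existsP [w /and5P [s0 _ _ Tw c]]; exists w.
  move: s0 c; rewrite inE => /eqP ->.
  by rewrite Tw (eq_connect (rW_T _)) -(eq_connect hr).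
rewrite !Prob_Ex.
rewrite (Ex_ext p (g := ev R (@adj d N) (in_bdry n) e1 setT [set origin d N])); last first.
  by move=> om; rewrite /ev /dir_reach (R1 _ e1 om).
rewrite [RHS](Ex_ext p (g := ev R (@adj d N) (in_bdry n) e2 setT [set origin d N])); last first.
  by move=> om; rewrite /ev /undir_reach (R1 _ e2 om).
exact: M.
Qed.
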